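(* Let $\mathcal{X}$ and $\mathcal{Y}$ be mm-spaces. If $L^{\mathcal{U}}_h(\mathcal{X},\mathcal{Y})=0$, then $(h^r_{\mathcal{X}})_\#\mu_X=(h^r_{\mathcal{Y}})_\#\mu_Y$ (as Borel probability measures on $\mathbb{R}$) for Lebesgue-almost every $r>0$.
   Context: A metric measure space (mm-space) is a triple $(X,d_X,\mu_X)$ with $(X,d_X)$ compact metric and $\mu_X$ a Borel probability measure of full support. $h_{\mathcal{X}}(x,r)=\mu_X(\{x'\in X: d_X(x,x')\le r\})$ and, for fixed $r>0$, $h^r_{\mathcal{X}}:X\to\mathbb{R}$ is $h^r_{\mathcal{X}}(x)=h_{\mathcal{X}}(x,r)$. With $c_{\mathcal{X},\mathcal{Y}}(x,y)=\int_0^\infty|h_{\mathcal{X}}(x,t)-h_{\mathcal{Y}}(y,t)|\,dt$ and $\mathcal{U}(\mu_X,\mu_Y)$ the set of probability measures on $X\times Y$ with marginals $\mu_X,\mu_Y$, $L^{\mathcal{U}}_h(\mathcal{X},\mathcal{Y})=\inf_{\mu\in\mathcal{U}(\mu_X,\mu_Y)}\int_{X\times Y}c_{\mathcal{X},\mathcal{Y}}\,d\mu$. *)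

(* Defs.v *)
From HB Require Import structures.
From mathcomp Require Import all_boot all_order all_algebra.
From mathcomp Require Import all_classical all_reals all_analysis.
Set Implicit Arguments. Unset Strict Implicit. Unset Printing Implicit Defensive.
Import Order.TTheory GRing.Theory Num.Theory.
Local Open Scope classical_set_scope.
Local Open Scope ring_scope.

Section mm.
Context {R : realType} {T : Type}.

Definition is_metric (dX : T -> T -> R) : Prop :=
  (forall x y, dX x y = 0 <-> x = y) /\
  (forall x y, dX x y = dX y x) /\
  (forall x y z, dX x z <= dX x y + dX y z).

Definition dopen (dX : T -> T -> R) (A : set T) : Prop :=
  forall x, A x -> exists2 e : R, 0 < e & forall y, dX x y < e -> A y.

Definition dcompact (dX : T -> T -> R) : Prop :=
  forall (I : Type) (U : I -> set T), (forall i, dopen dX (U i)) ->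
    [set: T] `<=` \bigcup_(i in [set: I]) U i ->
    exists2 F : set I, finite_set F & [set: T] `<=` \bigcup_(i in F) U i.
End mm.

(* (T, dX, mu) is an mm-space: compact metric, measurable sets = Borel sets
   of the metric topology, mu a probability measure with full support
   (every nonempty open set has positive measure). *)
Definition mm_space {R : realType} {d : measure_display} {T : measurableType d}
  (dX : T -> T -> R) (mu : probability T R) : Prop :=
  [/\ is_metric dX, dcompact dX,
      (@measurable d T) = <<s dopen dX >> &
      forall A : set T, dopen dX A -> A !=set0 -> (0 < mu A)%E].

Definition hfun {R : realType} {d : measure_display} {T : measurableType d}
  (dX : T -> T -> R) (mu : probability T R) (x : T) (r : R) : R :=
  fine (mu [set x' | dX x x' <= r]).

Definition hcost {R : realType} {d1 d2 : measure_display}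
  {T1 : measurableType d1} {T2 : measurableType d2}
  (dX : T1 -> T1 -> R) (muX : probability T1 R)
  (dY : T2 -> T2 -> R) (muY : probability T2 R) (x : T1) (y : T2) : \bar R :=
  (\int[lebesgue_measure]_(t in `[0%R, +oo[%classic)
     (`| hfun dX muX x t - hfun dY muY y t |)%:E)%E.

Definition coupling {R : realType} {d1 d2 : measure_display}
  {T1 : measurableType d1} {T2 : measurableType d2}
  (muX : probability T1 R) (muY : probability T2 R)
  (pi : probability (T1 * T2)%type R) : Prop :=
  (forall A : set T1, measurable A -> pi (A `*` [set: T2]) = muX A) /\
  (forall B : set T2, measurable B -> pi ([set: T1] `*` B) = muY B).

Definition LUh {R : realType} {d1 d2 : measure_display}
  {T1 : measurableType d1} {T2 : measurableType d2}
  (dX : T1 -> T1 -> R) (muX : probability T1 R)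
  (dY : T2 -> T2 -> R) (muY : probability T2 R) : \bar R :=
  ereal_inf [set (\int[pi]_z hcost dX muX dY muY z.1 z.2)%E
            | pi in [set pi | coupling muX muY pi]].

(* Main.v *)
Require Import Defs.
From HB Require Import structures.
From mathcomp Require Import all_boot all_order all_algebra.
From mathcomp Require Import all_classical all_reals all_analysis.
From mathcomp Require Import lra measurable_realfun.
From mathcomp Require Import lebesgue_integral_theory.lebesgue_integral_nonneg.
Import Order.TTheory GRing.Theory Num.Theory.
Import numFieldNormedType.Exports.
Local Open Scope classical_set_scope.
Local Open Scope ring_scope.

Lemma small_inv (R : realType) (e : R) : 0 < e -> exists n : nat, n.+1%:R^-1 < e.
Proof.
move=> e0; exists (Num.trunc e^-1).
rewrite -[X in _ < X](invrK e) ltf_pV2 ?posrE ?invr_gt0 ?ltr0n//.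
exact: truncnS_gt.
Qed.

Lemma le_small (R : realType) (a b : R) : (forall n : nat, a <= b + n.+1%:R^-1) -> a <= b.
Proof.
move=> h; apply/ler_addgt0Pr => e e0.
have [n hn] := @small_inv R e e0.
by apply: (le_trans (h n)); rewrite lerD2l ltW.
Qed.

Lemma cvg_ev_lt (R : realType) (u : nat -> R) (l a : R) : u n @[n --> \oo] --> l -> l < a ->
  exists N, forall n, (N <= n)%N -> u n < a.
Proof.
move=> hu la; have := cvgr_lt l hu a la.
by case=> N _ hN; exists N => n Nn; exact: hN.
Qed.

Section mm.
Context (R : realType) d (T : measurableType d) (dX : T -> T -> R) (mu : probability T R).
Hypothesis hmm : mm_space dX mu.

Let ball x t := [set x' | dX x x' <= t].

Lemma dopen_meas A : dopen dX A -> measurable A.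
Proof. by case: hmm => _ _ hM _ oA; rewrite hM; exact: sub_sigma_algebra. Qed.

Lemma ball_meas x t : measurable (ball x t).
Proof.
case: hmm => [[d0 [dsym dtri]]] _ _ _.
have -> : ball x t = ~` [set x' | t < dX x x'].
  by apply/seteqP; split => z /= h; [apply/negP; rewrite -leNgt | move/negP: h; rewrite -leNgt].
apply: measurableC; apply: dopen_meas => z /= tz.
exists (dX x z - t); first by rewrite subr_gt0.
move=> y hy /=; have := dtri x y z; rewrite (dsym y z); lra.
Qed.

Lemma hE x t : (hfun dX mu x t)%:E = mu (ball x t).
Proof. by rewrite /hfun fineK// fin_num_measure//; exact: ball_meas. Qed.

Lemma h_ge0 x t : 0 <= hfun dX mu x t.
Proof. by rewrite -lee_fin hE measure_ge0. Qed.

Lemma h_le1 x t : hfun dX mu x t <= 1.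
Proof. by rewrite -lee_fin hE probability_le1//; exact: ball_meas. Qed.

Lemma h_mono x s t : s <= t -> hfun dX mu x s <= hfun dX mu x t.
Proof.
move=> st; rewrite -lee_fin !hE; apply: le_measure; rewrite ?inE; try exact: ball_meas.
by move=> z /= hz; exact: le_trans st.
Qed.

Lemma h_rc x t a : hfun dX mu x t < a -> exists N, forall n, (N <= n)%N ->
  hfun dX mu x (t + n.+1%:R^-1) < a.
Proof.
move=> ha.
pose F n := ball x (t + n.+1%:R^-1).
have capF : \bigcap_n F n = ball x t.
  apply/seteqP; split => z /=.
    by move=> h; apply: le_small => n; exact: h.
  move=> h n _; apply: (le_trans h); rewrite lerDl invr_ge0//.
have hc : (mu \o F) x @[x --> \oo] --> (hfun dX mu x t)%:E.
  rewrite hE -capF; apply: nonincreasing_cvg_mu.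
  - by apply: (le_lt_trans (probability_le1 _ _)); [exact: ball_meas|exact: ltry].
  - by move=> n; exact: ball_meas.
  - by rewrite capF; exact: ball_meas.
  move=> n m nm; apply/subsetPset => z /= hz; apply: (le_trans hz); rewrite lerD2l lef_pV2 ?posrE ?ltr0n//.
  by rewrite ler_nat.
have /fine_cvgP[_ hc2] := hc.
have [N hN] := @cvg_ev_lt R _ _ _ hc2 ha.
exists N => n Nn; have := hN n Nn.
by rewrite /= /F -hE.
Qed.

Lemma h_meas t : measurable_fun setT (fun x => hfun dX mu x t).
Proof.
case: hmm => [[d0 [dsym dtri]]] _ _ _.
apply: (@measurability _ _ _ _ setT _ (@measurable_realfun.RGenInftyO.G R)); first exact: (measurable_realfun.RGenInftyO.measurableE R).
move=> _ [_ [a ->] <-]; rewrite setTI; apply: dopen_meas => x /=.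
rewrite in_itv /= => ha.
have [N hN] := @h_rc x t a ha.
exists (N.+1%:R^-1); first by rewrite invr_gt0 ltr0n.
move=> y hy; rewrite in_itv /=.
apply: le_lt_trans (hN N (leqnn N)).
rewrite -!lee_fin !hE; apply: le_measure; rewrite ?inE; try exact: ball_meas.
move=> z; rewrite /ball /= => hz; apply: (le_trans (dtri x y z)); by rewrite addrC lerD// ltW.
Qed.

End mm.
Arguments h_meas {R d T dX mu}.
Arguments h_rc {R d T dX mu}.
Arguments h_mono {R d T dX mu}.
Arguments h_ge0 {R d T dX mu}.
Arguments h_le1 {R d T dX mu}.
Arguments ball_meas {R d T dX mu}.

Lemma le_lint d (T : measurableType d) (R : realType) (mu : {measure set T -> \bar R}) (D : set T) (f g : T -> \bar R) :
  (forall x, D x -> (0 <= f x)%E) -> (forall x, D x -> (f x <= g x)%E) ->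
  (\int[mu]_(x in D) f x <= \int[mu]_(x in D) g x)%E.
Proof.
move=> f0 fg.
have g0 : forall x, D x -> (0 <= g x)%E by move=> x Dx; exact: le_trans (f0 x Dx) (fg x Dx).
rewrite !ge0_integralE//.
apply: le_ereal_sup => _ [h hf <-]; exists h => // x.
apply: le_trans (hf x) _.
rewrite /patch; case: ifP => // /set_mem; exact: fg.
Qed.

Lemma real_ineq (R : realType) (a0 a a1 b0 b b1 : R) : a0 <= a -> a <= a1 -> b0 <= b -> b <= b1 ->
  `|a0 - b0| - (a1 - a0) - (b1 - b0) <= `|a - b|.
Proof.
move=> h1 h2 h3 h4.
have n1 := ler_norm (a - b).
have n2 : - (a - b) <= `|a - b| by rewrite -normrN ler_norm.
have : `|a0 - b0| <= `|a - b| + (a1 - a0) + (b1 - b0).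
  rewrite ler_norml; apply/andP; split; lra.
lra.
Qed.

Lemma cost_lb {R : realType} d1 d2 (T1 : measurableType d1) (T2 : measurableType d2)
  (dX : T1 -> T1 -> R) (muX : probability T1 R) (dY : T2 -> T2 -> R) (muY : probability T2 R) :
  mm_space dX muX -> mm_space dY muY ->
  forall x y r e, 0 <= r -> 0 < e ->
  let K := `|hfun dX muX x r - hfun dY muY y r| - (hfun dX muX x (r + e) - hfun dX muX x r)
     - (hfun dY muY y (r + e) - hfun dY muY y r) in
  0 <= K -> ((e * K)%:E <= hcost dX muX dY muY x y)%E.
Proof.
move=> hmX hmY x y r e r0 e0 K K0.
rewrite /hcost.
have -> : (e * K)%:E = (\int[lebesgue_measure]_(t in `[0%R, +oo[%classic) (K%:E * (\1_(`[r, r + e]%classic) t)%:E))%E.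
  have mI : measurable_fun (`[0%R, +oo[%classic : set R) (fun t : R => (\1_(`[r, r + e]%classic : set R) t)%:E : \bar R).
    by apply/measurable_EFinP; exact: measurable_indic.
  have f0 : forall t : R, (`[0%R, +oo[%classic : set R) t -> (0 <= ((\1_(`[r, r + e]%classic : set R) t : R))%:E)%E.
    by move=> t ht; rewrite lee_fin.
  have h := ge0_integralZl_EFin (@lebesgue_measure R) (measurable_itv `[0%R, +oo[) f0 mI K0.
  rewrite /= in h; rewrite h.
  rewrite integral_indic // setIidl; last first.
    by move=> t /=; rewrite !in_itv /= => /andP[rt _]; rewrite (le_trans r0 rt).
  have hl : (@lebesgue_measure R (`[r, r + e]%classic : set R)) = e%:E.
    by rewrite lebesgue_measure_itv /= lte_fin ltrDl e0 /= -EFinB addrAC subrr add0r.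
  rewrite EFinM muleC; congr (_ * _)%E; exact: (esym hl).
apply: le_lint.
- by move=> t _; rewrite -EFinM lee_fin mulr_ge0.
move=> t _; rewrite -EFinM lee_fin indicE.
case: (boolP (t \in _)) => /= ht; last by rewrite mulr0.
rewrite mulr1; move: ht; rewrite inE /= in_itv /= => /andP[rt te].
apply: real_ineq; by apply: h_mono.
Qed.
Arguments cost_lb {R d1 d2 T1 T2 dX muX dY muY}.

Lemma mpre (R : realType) d (T : measurableType d) (f : T -> R) :
  measurable_fun setT f -> forall i : interval R, measurable (f @^-1` [set` i]).
Proof. by move=> mf i; rewrite -(setTI (f @^-1` _)); exact: (mf measurableT _ (measurable_itv i)). Qed.

Section main.
Context (R : realType) d1 d2 (T1 : measurableType d1) (T2 : measurableType d2)
  (dX : T1 -> T1 -> R) (muX : probability T1 R) (dY : T2 -> T2 -> R) (muY : probability T2 R).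
Hypotheses (hmX : mm_space dX muX) (hmY : mm_space dY muY).
Local Notation hx := (hfun dX muX).
Local Notation hy := (hfun dY muY).

Definition EX r e (a : R) := (fun x => hx x (r + e) - hx x r) @^-1` `]a, +oo[.
Definition EY r e (a : R) := (fun y => hy y (r + e) - hy y r) @^-1` `]a, +oo[.
Definition SS r e (eta : R) := ((fun z : T1 * T2 => `|hx z.1 r - hy z.2 r|) @^-1` `]eta, +oo[)
   `&` ~` (EX r e (eta / 3) `*` setT) `&` ~` (setT `*` EY r e (eta / 3)).

Lemma mEX r e a : measurable (EX r e a).
Proof. by apply: mpre; apply: measurable_funB; exact: (h_meas hmX). Qed.

Lemma mEY r e a : measurable (EY r e a).
Proof. by apply: mpre; apply: measurable_funB; exact: (h_meas hmY). Qed.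

Lemma mSS r e eta : measurable (SS r e eta).
Proof.
apply: measurableI; first apply: measurableI.
- apply: mpre; apply: measurableT_comp; first exact: normr_measurable.
  apply: measurable_funB.
    exact: (measurableT_comp (h_meas hmX r) measurable_fst).
  exact: (measurableT_comp (h_meas hmY r) measurable_snd).
- by apply: measurableC; apply: measurableX => //; exact: mEX.
- by apply: measurableC; apply: measurableX => //; exact: mEY.
Qed.

Lemma core pi : coupling muX muY pi -> forall r e eta, 0 <= r -> 0 < eta -> 0 < e ->
  (((e * eta / 3)%:E * pi (SS r e eta)) <= \int[pi]_z hcost dX muX dY muY z.1 z.2)%E.
Proof.
move=> cpl r e eta r0 eta0 e0.
have k0 : 0 <= e * eta / 3 by rewrite divr_ge0// mulr_ge0// ltW.
have mI : measurable_fun setT (fun z : T1 * T2 => ((\1_(SS r e eta) z : R))%:E).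
  by apply/measurable_EFinP; apply: measurable_indic; exact: mSS.
have f0 : forall z : T1 * T2, setT z -> (0 <= ((\1_(SS r e eta) z : R))%:E)%E.
  by move=> z hz; rewrite lee_fin.
have h := ge0_integralZl_EFin pi measurableT f0 mI k0.
rewrite /= in h.
have -> : pi (SS r e eta) = pi (SS r e eta `&` setT) by rewrite setIT.
rewrite -integral_indic //; last exact: mSS.
rewrite -h.
apply: le_lint.
  by move=> z _; rewrite -EFinM lee_fin mulr_ge0.
move=> [x y] _; rewrite -EFinM indicE.
case: (boolP ((x, y) \in _)) => hz; last first.
  by rewrite mulr0 integral_ge0// => t _; rewrite lee_fin.
rewrite mulr1; move: hz; rewrite inE /SS /= => -[[]].
rewrite in_itv /= andbT => h1 h2 h3.
have h2' : hx x (r + e) - hx x r <= eta / 3.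
  by rewrite leNgt; apply/negP => hc; apply: h2; split => //=; rewrite /EX /EY /= in_itv /= hc.
have h3' : hy y (r + e) - hy y r <= eta / 3.
  by rewrite leNgt; apply/negP => hc; apply: h3; split => //=; rewrite /EX /EY /= in_itv /= hc.
set K := `|hx x r - hy y r| - (hx x (r + e) - hx x r) - (hy y (r + e) - hy y r).
have hK : eta / 3 <= K by rewrite /K; lra.
have K0 : 0 <= K by lra.
have hc := cost_lb hmX hmY x y r e r0 e0 K0.
apply: le_trans hc; rewrite lee_fin -mulrA ler_pM2l//.
Qed.

End main.
Arguments EX {R d1 T1} dX muX.
Arguments EY {R d2 T2} dY muY.
Arguments SS {R d1 d2 T1 T2} dX muX dY muY.
Arguments mEX {R d1 T1 dX muX}.
Arguments mEY {R d2 T2 dY muY}.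
Arguments mSS {R d1 d2 T1 T2 dX muX dY muY}.
Arguments core {R d1 d2 T1 T2 dX muX dY muY}.

Section main2.
Context (R : realType) d1 d2 (T1 : measurableType d1) (T2 : measurableType d2)
  (dX : T1 -> T1 -> R) (muX : probability T1 R) (dY : T2 -> T2 -> R) (muY : probability T2 R).
Hypotheses (hmX : mm_space dX muX) (hmY : mm_space dY muY).
Local Notation hx := (hfun dX muX).
Local Notation hy := (hfun dY muY).
Local Notation EX := (EX dX muX).
Local Notation EY := (EY dY muY).
Local Notation SS := (SS dX muX dY muY).

Lemma measU4 (pi : probability (T1 * T2)%type R) {A B C D} : measurable A -> measurable B ->
  measurable C -> measurable D ->
  (pi (((A `|` B) `|` C) `|` D) <= pi A + pi B + pi C + pi D)%E.
Proof.
move=> mA mB mC mD.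
have h1 := measureU2 pi (measurableU _ _ (measurableU _ _ mA mB) mC) mD.
have h2 := measureU2 pi (measurableU _ _ mA mB) mC.
have h3 := measureU2 pi mA mB.
apply: (le_trans h1); rewrite leeD2r//.
apply: (le_trans h2); rewrite leeD2r//.
Qed.

Lemma ineq pi : coupling muX muY pi -> forall r e q eta : R,
  (muX ((hx^~ r) @^-1` `[q, +oo[) <= muY ((hy^~ r) @^-1` `[(q - eta)%R, +oo[)
     + muX (EX r e (eta / 3)%R) + muY (EY r e (eta / 3)%R) + pi (SS r e eta))%E /\
  (muY ((hy^~ r) @^-1` `[q, +oo[) <= muX ((hx^~ r) @^-1` `[(q - eta)%R, +oo[)
     + muX (EX r e (eta / 3)%R) + muY (EY r e (eta / 3)%R) + pi (SS r e eta))%E.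
Proof.
move=> [cX cY] r e q eta.
have mQX a : measurable ((hx^~ r) @^-1` `[a, +oo[) by apply: mpre; exact: (h_meas hmX).
have mQY a : measurable ((hy^~ r) @^-1` `[a, +oo[) by apply: mpre; exact: (h_meas hmY).
have mX := mEX hmX r e (eta / 3).
have mY := mEY hmY r e (eta / 3).
have mS := mSS hmX hmY r e eta.
split.
- rewrite -cX // -(cY _ (mQY _)) -(cX _ mX) -(cY _ mY).
  have mR1 := measurableX (@measurableT _ T1) (mQY (q - eta)%R).
  have mR2 := measurableX mX (@measurableT _ T2).
  have mR3 := measurableX (@measurableT _ T1) mY.
  apply: (le_trans _ (measU4 pi mR1 mR2 mR3 mS)).
  apply: le_measure; rewrite ?inE; first exact: measurableX.
    by apply: measurableU => //; apply: measurableU => //; apply: measurableU.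
  move=> [x y] [/= hq _].
  have [Q2|nQ2] := pselect (((hy^~ r) @^-1` `[q - eta, +oo[) y); first by left; left; left.
  have [EXx|nEX] := pselect (EX r e (eta / 3) x); first by left; left; right.
  have [EYy|nEY] := pselect (EY r e (eta / 3) y); first by left; right.
  right; split; [split|].
  + move: hq nQ2; rewrite /= !in_itv /= !andbT => hq nQ2.
    have : hy y r < q - eta by rewrite ltNge; apply/negP.
    move=> h; apply: lt_le_trans (ler_norm _); lra.
  + by move=> [].
  + by move=> [].
- rewrite -cY // -(cX _ (mQX _)) -(cX _ mX) -(cY _ mY).
  have mR1 := measurableX (mQX (q - eta)%R) (@measurableT _ T2).
  have mR2 := measurableX mX (@measurableT _ T2).
  have mR3 := measurableX (@measurableT _ T1) mY.
  apply: (le_trans _ (measU4 pi mR1 mR2 mR3 mS)).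
  apply: le_measure; rewrite ?inE; first exact: measurableX.
    by apply: measurableU => //; apply: measurableU => //; apply: measurableU.
  move=> [x y] [_ /= hq].
  have [Q2|nQ2] := pselect (((hx^~ r) @^-1` `[q - eta, +oo[) x); first by left; left; left.
  have [EXx|nEX] := pselect (EX r e (eta / 3) x); first by left; left; right.
  have [EYy|nEY] := pselect (EY r e (eta / 3) y); first by left; right.
  right; split; [split|].
  + move: hq nQ2; rewrite /= !in_itv /= !andbT => hq nQ2.
    have : hx x r < q - eta by rewrite ltNge; apply/negP.
    move=> h; rewrite distrC; apply: lt_le_trans (ler_norm _); lra.
  + by move=> [].
  + by move=> [].
Qed.

End main2.
Arguments ineq {R d1 d2 T1 T2 dX muX dY muY}.

Section main3.
Context (R : realType) d1 d2 (T1 : measurableType d1) (T2 : measurableType d2)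
  (dX : T1 -> T1 -> R) (muX : probability T1 R) (dY : T2 -> T2 -> R) (muY : probability T2 R).
Hypotheses (hmX : mm_space dX muX) (hmY : mm_space dY muY).
Hypothesis hL : LUh dX muX dY muY = 0%E.
Local Notation hx := (hfun dX muX).
Local Notation hy := (hfun dY muY).
Local Notation EX := (EX dX muX).
Local Notation EY := (EY dY muY).
Local Notation SS := (SS dX muX dY muY).

Lemma small_pi r e eta eps : 0 <= r -> 0 < eta -> 0 < e -> 0 < eps ->
  exists pi, coupling muX muY pi /\ (pi (SS r e eta) <= eps%:E)%E.
Proof.
move=> r0 eta0 e0 eps0.
have k0 : 0 < e * eta / 3 by rewrite divr_gt0// mulr_gt0.
have fin : LUh dX muX dY muY \is a fin_num by rewrite hL.
have [_ [pi cpl <-] hz] := lb_ereal_inf_adherent (mulr_gt0 eps0 k0) fin.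
exists pi; split => //.
move: hz; have hL2 := hL; rewrite /LUh in hL2; rewrite hL2 add0e => hz.
have hc := core hmX hmY pi cpl r e eta r0 eta0 e0.
have finS : pi (SS r e eta) \is a fin_num by rewrite fin_num_measure//; exact: mSS.
rewrite -(@lee_pmul2l _ (e * eta / 3)%:E) ?lte_fin//.
apply: (le_trans hc); apply: ltW; apply: (lt_le_trans hz).
by rewrite -EFinM mulrC.
Qed.

Lemma stepA r e q eta : 0 <= r -> 0 < eta -> 0 < e ->
  (muX ((hx^~ r) @^-1` `[q, +oo[) <= muY ((hy^~ r) @^-1` `[(q - eta)%R, +oo[)
     + muX (EX r e (eta / 3)%R) + muY (EY r e (eta / 3)%R))%E /\
  (muY ((hy^~ r) @^-1` `[q, +oo[) <= muX ((hx^~ r) @^-1` `[(q - eta)%R, +oo[)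
     + muX (EX r e (eta / 3)%R) + muY (EY r e (eta / 3)%R))%E.
Proof.
move=> r0 eta0 e0; split; apply/lee_addgt0Pr => eps eps0;
  have [pi [cpl hpi]] := small_pi r e eta eps r0 eta0 e0 eps0;
  have [h1 h2] := ineq hmX hmY pi cpl r e q eta.
- by apply: (le_trans h1); rewrite leeD2l.
- by apply: (le_trans h2); rewrite leeD2l.
Qed.

End main3.
Arguments stepA {R d1 d2 T1 T2 dX muX dY muY}.

Lemma H1 (R : realType) d (T : measurableType d) (mu : probability T R) (F : nat -> set T) :
  (forall n, measurable (F n)) -> measurable (\bigcap_n F n) ->
  (forall n m, (n <= m)%N -> F m `<=` F n) ->
  (fun n => mu (F n)) @ \oo --> mu (\bigcap_n F n).
Proof.
move=> mF mI hF; apply: nonincreasing_cvg_mu => //.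
  by apply: (le_lt_trans (probability_le1 _ _)) => //; exact: ltry.
by move=> n m nm; apply/subsetPset; exact: hF.
Qed.

Lemma H3 (R : realType) (u : nat -> \bar R) (a l : \bar R) :
  u @ \oo --> l -> (forall n, (a <= u n)%E) -> (a <= l)%E.
Proof.
move=> hu ha; rewrite -(cvg_lim _ hu) //; apply: lime_ge; first by apply/cvg_ex; exists l.
by apply: nearW.
Qed.

Lemma H2 (R : realType) (u v : nat -> \bar R) (a b : \bar R) : b \is a fin_num ->
  u @ \oo --> 0%E -> v @ \oo --> 0%E -> (forall n, (a <= b + u n + v n)%E) -> (a <= b)%E.
Proof.
move=> bf hu hv h.
apply: (@H3 R _ _ _ _ h).
have h1 : (b +? 0)%E by rewrite fin_num_adde_defl.
have h2 : (b + 0 +? 0)%E by rewrite adde0 fin_num_adde_defl.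
have := cvgeD h2 (cvgeD h1 (cvg_cst b) hu) hv.
by rewrite !adde0; apply.
Qed.

Section final.
Context (R : realType) d1 d2 (T1 : measurableType d1) (T2 : measurableType d2)
  (dX : T1 -> T1 -> R) (muX : probability T1 R) (dY : T2 -> T2 -> R) (muY : probability T2 R).
Hypotheses (hmX : mm_space dX muX) (hmY : mm_space dY muY).
Hypothesis hL : LUh dX muX dY muY = 0%E.
Local Notation hx := (hfun dX muX).
Local Notation hy := (hfun dY muY).

Lemma EX0 r (a : R) : 0 < a ->
  (fun n => muX (EX dX muX r n.+1%:R^-1 a)) @ \oo --> 0%E.
Proof.
move=> a0.
have I0 : \bigcap_n EX dX muX r n.+1%:R^-1 a = set0.
  apply/seteqP; split => // x hx0.
  have hlt : hx x r < hx x r + a by rewrite ltrDl.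
  have [N hN] := h_rc hmX x r (hx x r + a) hlt.
  have := hx0 N I; rewrite /EX /= in_itv /= andbT.
  have := hN N (leqnn N); lra.
rewrite -(measure0 muX) -I0; apply: H1.
- by move=> n; exact: mEX.
- by rewrite I0.
move=> n m nm x; rewrite /EX /= !in_itv /= !andbT => h; apply: lt_le_trans h _.
rewrite lerD2r; apply: (h_mono hmX); rewrite lerD2l lef_pV2 ?posrE ?ltr0n//.
by rewrite ler_nat.
Qed.

Lemma EY0 r (a : R) : 0 < a ->
  (fun n => muY (EY dY muY r n.+1%:R^-1 a)) @ \oo --> 0%E.
Proof.
move=> a0.
have I0 : \bigcap_n EY dY muY r n.+1%:R^-1 a = set0.
  apply/seteqP; split => // x hx0.
  have hlt : hy x r < hy x r + a by rewrite ltrDl.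
  have [N hN] := h_rc hmY x r (hy x r + a) hlt.
  have := hx0 N I; rewrite /EY /= in_itv /= andbT.
  have := hN N (leqnn N); lra.
rewrite -(measure0 muY) -I0; apply: H1.
- by move=> n; exact: mEY.
- by rewrite I0.
move=> n m nm x; rewrite /EY /= !in_itv /= !andbT => h; apply: lt_le_trans h _.
rewrite lerD2r; apply: (h_mono hmY); rewrite lerD2l lef_pV2 ?posrE ?ltr0n//.
by rewrite ler_nat.
Qed.

Lemma stepB r q eta : 0 <= r -> 0 < eta ->
  (muX ((hx^~ r) @^-1` `[q, +oo[) <= muY ((hy^~ r) @^-1` `[(q - eta)%R, +oo[))%E /\
  (muY ((hy^~ r) @^-1` `[q, +oo[) <= muX ((hx^~ r) @^-1` `[(q - eta)%R, +oo[))%E.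
Proof.
move=> r0 eta0.
have eta3 : 0 < eta / 3 by rewrite divr_gt0.
have ep n : 0 < n.+1%:R^-1 :> R by rewrite invr_gt0 ltr0n.
split.
- apply: (@H2 R _ _ _ _ _ (EX0 r _ eta3) (EY0 r _ eta3)).
    by rewrite fin_num_measure//; apply: mpre; exact: (h_meas hmY).
  by move=> n; exact: (stepA hmX hmY hL r n.+1%:R^-1 q eta r0 eta0 (ep n)).1.
- apply: (@H2 R _ _ _ _ _ (EX0 r _ eta3) (EY0 r _ eta3)).
    by rewrite fin_num_measure//; apply: mpre; exact: (h_meas hmX).
  by move=> n; exact: (stepA hmX hmY hL r n.+1%:R^-1 q eta r0 eta0 (ep n)).2.
Qed.

Lemma stepC r q : 0 <= r ->
  muX ((hx^~ r) @^-1` `[q, +oo[) = muY ((hy^~ r) @^-1` `[q, +oo[).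
Proof.
move=> r0.
have ep n : 0 < n.+1%:R^-1 :> R by rewrite invr_gt0 ltr0n.
have capE : (`[q, +oo[%classic : set R) = \bigcap_n (`[(q - n.+1%:R^-1)%R, +oo[%classic : set R).
  apply/seteqP; split => a /=; rewrite in_itv /= andbT.
    move=> hq n _; rewrite /= in_itv /= andbT; apply: le_trans hq.
    by rewrite lerBlDr lerDl ltW.
  move=> h; apply: le_small => n; have := h n I; rewrite /= in_itv /= andbT.
  by rewrite lerBlDr.
have hF (U : Type) (F : U -> R) n m : (n <= m)%N ->
    F @^-1` `[(q - m.+1%:R^-1)%R, +oo[ `<=` F @^-1` `[(q - n.+1%:R^-1)%R, +oo[.
  move=> nm a; rewrite /= !in_itv /= !andbT; apply: le_trans.
  by rewrite lerB// lef_pV2 ?posrE ?ltr0n// ler_nat.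
apply/eqP; rewrite eq_le; apply/andP; split.
- have -> : (hy^~ r) @^-1` `[q, +oo[ = \bigcap_n ((hy^~ r) @^-1` `[(q - n.+1%:R^-1)%R, +oo[).
    by rewrite -preimage_bigcap -capE.
  apply: (@H3 R _ _ _ (@H1 R _ _ muY (fun n => (hy^~ r) @^-1` `[(q - n.+1%:R^-1)%R, +oo[) _ _ (hF _ (hy^~ r)))).
  + by move=> n; apply: mpre; exact: (h_meas hmY).
  + by rewrite -preimage_bigcap -capE; apply: mpre; exact: (h_meas hmY).
  by move=> n; exact: (stepB r q n.+1%:R^-1 r0 (ep n)).1.
- have -> : (hx^~ r) @^-1` `[q, +oo[ = \bigcap_n ((hx^~ r) @^-1` `[(q - n.+1%:R^-1)%R, +oo[).
    by rewrite -preimage_bigcap -capE.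
  apply: (@H3 R _ _ _ (@H1 R _ _ muX (fun n => (hx^~ r) @^-1` `[(q - n.+1%:R^-1)%R, +oo[) _ _ (hF _ (hx^~ r)))).
  + by move=> n; apply: mpre; exact: (h_meas hmX).
  + by rewrite -preimage_bigcap -capE; apply: mpre; exact: (h_meas hmX).
  by move=> n; exact: (stepB r q n.+1%:R^-1 r0 (ep n)).2.
Qed.

End final.
Arguments stepC {R d1 d2 T1 T2 dX muX dY muY}.

Lemma pf_unique d (T : measurableType d) d' (T' : measurableType d') (R : realType)
  (mu : probability T R) (nu : probability T' R) (f : T -> R) (g : T' -> R)
  (mf : measurable_fun setT f) (mg : measurable_fun setT g) :
 (forall q, mu (f @^-1` `[q, +oo[) = nu (g @^-1` `[q, +oo[)) ->
 (forall A, measurable A -> pushforward mu f A = pushforward nu g A).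
Proof.
move=> hq.
pose m1 : measure R R := ltac:(refine (pushforward mu f : measure _ _); exact: mf).
pose m2 : measure R R := ltac:(refine (pushforward nu g : measure _ _); exact: mg).
move=> A mA.
have -> : pushforward mu f A = m1 A by [].
have -> : pushforward nu g A = m2 A by [].
apply: (measure_unique (@measurable_realfun.RGenCInfty.G R) (fun k : nat => `[(- (k%:R))%R, +oo[%classic) _ _ _ _ m1 m2) => //.
- exact: (measurable_realfun.RGenCInfty.measurableE R).
- move=> _ _ [x ->] [y ->]; exists (Order.max x y).
  apply/seteqP; split => z /=; rewrite !in_itv/= !andbT ?ge_max.
   by move=> [-> ->].
  by move/andP.
- by move=> k; exists (- k%:R)%R.
- apply/seteqP; split => // z _ /=.
  have [k hk] : exists k : nat, (- z <= k%:R)%R.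
    exists (Num.trunc `|(- z)%R|).+1; apply: (le_trans (ler_norm _)).
    exact: ltW (truncnS_gt _).
  by exists k => //=; rewrite in_itv/= andbT lerNl.
- by move=> _ [x ->]; exact: hq.
- move=> k; rewrite [X in (X < _)%E](_ : _ = mu (f @^-1` `[(- k%:R)%R, +oo[%classic)) //.
  apply: (le_lt_trans (probability_le1 _ _)); last exact: ltry.
  by rewrite -[X in measurable X]setTI; apply: (mf).
Qed.

Theorem lemma6p5 (R : realType) (d1 d2 : measure_display)
  (T1 : measurableType d1) (T2 : measurableType d2)
  (dX : T1 -> T1 -> R) (muX : probability T1 R)
  (dY : T2 -> T2 -> R) (muY : probability T2 R) :
  mm_space dX muX -> mm_space dY muY ->
  LUh dX muX dY muY = 0%E ->
  {ae (@lebesgue_measure R), forall r : R, 0 < r ->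
    forall A : set R, measurable A ->
      pushforward muX (fun x => hfun dX muX x r) A =
      pushforward muY (fun y => hfun dY muY y r) A}.
Proof.
move=> hmX hmY hL; apply: aeW => r r0 A mA.
apply: (@pf_unique _ _ _ _ R muX muY _ _ (h_meas hmX r) (h_meas hmY r)) => // q.
exact: (stepC hmX hmY hL r q (ltW r0)).
Qed.
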